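(* Let $V$ be a space. The following are equivalent: (i) $V$ is homothetic to $\langle 1,\tau\rangle_{\mathbb{Q}}$ for some root of unity $\tau$; (ii) $V$ contains a rational triple containing two perpendicular vectors; (iii) $V$ contains a rational $4$-tuple containing two perpendicular vectors.
   Context: A space is a $2$-dimensional $\mathbb{Q}$-vector subspace $V\subset\mathbb{C}$ containing two $\mathbb{R}$-linearly independent vectors; $\langle 1,\tau\rangle_{\mathbb{Q}}=\mathbb{Q}+\mathbb{Q}\tau$. Spaces $V_1,V_2$ are homothetic if $V_2=\lambda V_1$ for some $\lambda\in\mathbb{C}^*$. A rational $n$-tuple in $V$ is a set of $n$ vectors of $V$ spanning $n$ distinct lines through $0$ such that for any two of them $v,w$ the argument of $w/v$ is a rational multiple of $\pi$. *)

(* Defs.v *)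
From Stdlib Require Import Reals QArith Qreals List.
From Coquelicot Require Import Coquelicot.
Open Scope R_scope.
Open Scope C_scope.

Definition Qscal (q : Q) (z : C) : C := RtoC (Q2R q) * z.

Definition Qspan (a b : C) : C -> Prop :=
  fun z => exists p q : Q, z = Qscal p a + Qscal q b.

Definition R_indep (x y : C) : Prop :=
  forall a b : R, RtoC a * x + RtoC b * y = 0 -> a = 0%R /\ b = 0%R.

Definition Q_indep (x y : C) : Prop :=
  forall a b : Q, Qscal a x + Qscal b y = 0 -> Q2R a = 0%R /\ Q2R b = 0%R.

Definition is_space (V : C -> Prop) : Prop :=
  V 0 /\
  (forall z w, V z -> V w -> V (z + w)) /\
  (forall (q : Q) z, V z -> V (Qscal q z)) /\
  (exists u w, V u /\ V w /\ Q_indep u w /\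
     forall z, V z -> exists p q : Q, z = Qscal p u + Qscal q w) /\
  (exists x y, V x /\ V y /\ R_indep x y).

Definition homothetic (V1 V2 : C -> Prop) : Prop :=
  exists lam : C, lam <> 0 /\
    forall z, V2 z <-> exists y, V1 y /\ z = lam * y.

Fixpoint Cpow (z : C) (n : nat) : C :=
  match n with O => 1 | S k => z * Cpow z k end.

Definition root_of_unity (t : C) : Prop :=
  exists n : nat, (0 < n)%nat /\ Cpow t n = 1.

Definition same_line (v w : C) : Prop := exists r : R, w = RtoC r * v.

(* the argument of w / v is a rational multiple of pi (arguments are
   defined modulo 2 pi, so this does not depend on the representative) *)
Definition rational_angle (v w : C) : Prop :=
  exists (q : Q) (r : R), 0 < r /\
    w / v = (r * cos (Q2R q * PI), r * sin (Q2R q * PI))%R.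

Definition rational_tuple (V : C -> Prop) (n : nat) (l : list C) : Prop :=
  length l = n /\
  (forall i, (i < n)%nat -> V (nth i l 0) /\ nth i l 0 <> 0) /\
  (forall i j, (i < n)%nat -> (j < n)%nat -> i <> j ->
     ~ same_line (nth i l 0) (nth j l 0) /\
     rational_angle (nth i l 0) (nth j l 0)).

Definition has_perpendicular (l : list C) : Prop :=
  exists i j, (i < length l)%nat /\ (j < length l)%nat /\ i <> j /\
    Re (nth i l 0 * Cconj (nth j l 0)) = 0%R.

(* Main.v *)
Require Import Defs.
From Stdlib Require Import Reals QArith Qreals List Lra Lia.
From Coquelicot Require Import Coquelicot.
Open Scope R_scope.
Open Scope C_scope.

Lemma Cpair_eq (a b c d : R) : a = c -> b = d -> (a, b) = (c, d) :> C.
Proof. intros; subst; reflexivity. Qed.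

Lemma Cmult_cancel_l (v z1 z2 : C) : v <> 0 -> v * z1 = v * z2 -> z1 = z2.
Proof.
  intros Hv H.
  replace z1 with (/ v * (v * z1)) by (field; auto).
  rewrite H. field; auto.
Qed.

Lemma Q2R_1' : Q2R 1 = 1%R.
Proof. unfold Q2R; simpl; field. Qed.

Lemma angle_of (v w : C) (s : R) (a : Q) :
  s <> 0%R ->
  w / v = ((s * cos (Q2R a * PI))%R, (s * sin (Q2R a * PI))%R) ->
  rational_angle v w.
Proof.
  intros Hs H.
  destruct (Rlt_or_le 0 s) as [Hp|Hn].
  - exists a, s. split; auto.
  - exists (a + 1)%Q, (- s)%R. split; [lra|].
    rewrite H, Q2R_plus, Q2R_1'.
    replace ((Q2R a + 1) * PI)%R with (Q2R a * PI + PI)%R by ring.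
    rewrite neg_cos, neg_sin. apply Cpair_eq; ring.
Qed.

Lemma good_pair (v w : C) (s : R) (a : Q) :
  v <> 0 -> s <> 0%R -> sin (Q2R a * PI) <> 0%R ->
  w = v * ((s * cos (Q2R a * PI))%R, (s * sin (Q2R a * PI))%R) ->
  w <> 0 /\ ~ same_line v w /\ ~ same_line w v /\
  rational_angle v w /\ rational_angle w v.
Proof.
  intros Hv Hs Hsin Hw.
  set (c := cos (Q2R a * PI)) in *.
  set (sn := sin (Q2R a * PI)) in *.
  assert (Hz : (((s * c)%R, (s * sn)%R) : C) <> RtoC 0).
  { intro E. injection E as E1 E2. apply Hsin. 
    apply (Rmult_eq_reg_l s); auto. rewrite E2; ring. }
  assert (Hcs : (c * c + sn * sn = 1)%R).
  { unfold c, sn. pose proof (sin2_cos2 (Q2R a * PI)). unfold Rsqr in *. lra. }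
  split; [|split; [|split; [|split]]].
  - rewrite Hw. apply Cmult_neq_0; auto.
  - intros [r Hr]. rewrite Hw in Hr.
    replace (RtoC r * v) with (v * RtoC r) in Hr by ring.
    apply Cmult_cancel_l in Hr; auto.
    injection Hr as _ E2. apply Hsin.
    apply (Rmult_eq_reg_l s); auto. rewrite E2; ring.
  - intros [r Hr]. rewrite Hw in Hr.
    replace (RtoC r * (v * ((s * c)%R, (s * sn)%R))) with
      (v * (RtoC r * ((s * c)%R, (s * sn)%R))) in Hr by ring.
    rewrite <- (Cmult_1_r v) in Hr at 1.
    apply Cmult_cancel_l in Hr; auto.
    unfold RtoC, Cmult in Hr; simpl in Hr.
    injection Hr as E1 E2.
    assert (r = 0%R).
    { assert (r * (s * sn) = 0)%R as E by lra.
      apply Rmult_integral in E. destruct E as [E|E]; auto.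
      apply Rmult_integral in E. destruct E; contradiction. }
    subst r. lra.
  - apply (angle_of v w s a Hs). rewrite Hw. unfold c, sn. field; auto.
  - apply (angle_of w v (/ s) (- a)). apply Rinv_neq_0_compat; auto.
    rewrite Q2R_opp.
    replace (- Q2R a * PI)%R with (- (Q2R a * PI))%R by ring.
    rewrite cos_neg, sin_neg. fold c sn.
    assert (Hd : ((s*c)^2 + (s*sn)^2 = s^2)%R).
    { replace ((s*c)^2 + (s*sn)^2)%R with (s^2*(c*c+sn*sn))%R by ring.
      rewrite Hcs; ring. }
    assert (E : v / w = / ((s * c)%R, (s * sn)%R)).
    { rewrite Hw. field. split; auto. }
    rewrite E. unfold Cinv; simpl fst; simpl snd. rewrite Hd.
    apply Cpair_eq; field; auto.
Qed.

Lemma Cpow_polar (x : R) (n : nat) :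
  Defs.Cpow (cos x, sin x) n = (cos (INR n * x), sin (INR n * x)).
Proof.
  induction n as [|n IH]; simpl Defs.Cpow.
  - simpl. rewrite Rmult_0_l, cos_0, sin_0. reflexivity.
  - rewrite IH. rewrite S_INR.
    replace ((INR n + 1) * x)%R with (x + INR n * x)%R by ring.
    rewrite cos_plus, sin_plus. unfold Cmult; simpl. f_equal; ring.
Qed.

Lemma Cmod_Cpow (z : C) (n : nat) : Cmod (Defs.Cpow z n) = (Cmod z ^ n)%R.
Proof.
  induction n as [|n IH]; simpl.
  - apply Cmod_1.
  - rewrite Cmod_mult, IH. reflexivity.
Qed.

Lemma pow_eq1 (x : R) (n : nat) : 0 <= x -> (0 < n)%nat -> (x ^ n = 1)%R -> x = 1%R.
Proof.
  intros H0 Hn H.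
  destruct (Rtotal_order x 1) as [Hl|[He|Hg]]; auto.
  - pose proof (pow_lt_1_compat x n (conj H0 Hl) Hn). lra.
  - pose proof (Rlt_pow_R1 x n Hg Hn). lra.
Qed.

Lemma root_polar (t : C) : root_of_unity t -> snd t <> 0%R ->
  exists q : Q, t = (cos (2 * (Q2R q * PI)), sin (2 * (Q2R q * PI))).
Proof.
  intros [n [Hn Ht]] Hy.
  assert (Hm : Cmod t = 1%R).
  { apply (pow_eq1 _ n); auto. apply Cmod_ge_0.
    rewrite <- Cmod_Cpow. rewrite Ht. apply Cmod_1. }
  destruct t as [x y]. simpl in Hy.
  assert (Hxy : (x * x + y * y = 1)%R).
    { assert (E : (Cmod (x, y) * Cmod (x, y) = 1)%R) by (rewrite Hm; ring).
      unfold Cmod in E. cbn [fst snd] in E.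
      rewrite sqrt_sqrt in E; nra. }
  assert (Hb : -1 <= x <= 1) by nra.
  assert (Hth : exists th, x = cos th /\ y = sin th).
  { destruct (Rle_or_lt 0 y) as [Hp|Hneg].
    - exists (acos x). rewrite cos_acos, sin_acos; auto. split; auto.
      replace (1 - x²)%R with (y²) by (unfold Rsqr; lra).
      rewrite sqrt_Rsqr; auto.
    - exists (- acos x)%R. rewrite cos_neg, sin_neg, cos_acos, sin_acos; auto. split; auto.
      replace (1 - x²)%R with (y²) by (unfold Rsqr; lra).
      rewrite sqrt_Rsqr_abs, Rabs_left; auto. lra. }
  destruct Hth as [th [Hx Hy']]. subst x y.
  rewrite Cpow_polar in Ht. injection Ht as _ Hs.
  apply sin_eq_0_0 in Hs. destruct Hs as [k Hk].
  destruct n as [|m]; [lia|].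
  exists (Qmake k (Pos.of_succ_nat (2 * m + 1))).
  assert (Eq : (2 * (Q2R (Qmake k (Pos.of_succ_nat (2 * m + 1))) * PI))%R = th).
  { unfold Q2R. cbn [Qnum Qden]. rewrite Znat.Zpos_P_of_succ_nat.
    rewrite succ_IZR, <- INR_IZR_INZ.
    rewrite S_INR in Hk. rewrite plus_INR, mult_INR. simpl INR.
    assert (0 <= INR m) by apply pos_INR.
    apply (Rmult_eq_reg_l (INR m + 1)). 2: lra.
    rewrite Hk. field. lra. }
  rewrite Eq. reflexivity.
Qed.

Lemma Q2R_half : Q2R (1 # 2) = (/ 2)%R.
Proof. unfold Q2R; simpl. field. Qed.
Lemma Q2R_two : Q2R (2 # 1) = 2%R.
Proof. unfold Q2R; simpl. field. Qed.

Lemma perp_of (v w : C) (s a : R) : cos a = 0%R ->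
  w = v * ((s * cos a)%R, (s * sin a)%R) -> Re (v * Cconj w) = 0%R.
Proof.
  intros Hc Hw. rewrite Hw, Hc. destruct v as [x y].
  unfold Re, Cconj, Cmult; simpl. ring.
Qed.

Lemma tau_nonreal (V : C -> Prop) (HV : is_space V) (t lam : C) :
  (forall z, V z <-> exists y, Qspan 1 t y /\ z = lam * y) -> snd t <> 0%R.
Proof.
  intros Hh Ht.
  destruct HV as [_ [_ [_ [_ [x [y [Hx [Hy Hind]]]]]]]].
  apply Hh in Hx. apply Hh in Hy.
  destruct Hx as [yx [[p1 [q1 E1]] Ex]].
  destruct Hy as [yy [[p2 [q2 E2]] Ey]].
  destruct t as [t1 t2]. simpl in Ht. subst t2.
  set (r1 := (Q2R p1 + Q2R q1 * t1)%R).
  set (r2 := (Q2R p2 + Q2R q2 * t1)%R).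
  assert (Hx : x = lam * RtoC r1).
  { rewrite Ex, E1. unfold Qscal, r1. apply injective_projections; simpl; ring. }
  assert (Hy : y = lam * RtoC r2).
  { rewrite Ey, E2. unfold Qscal, r2. apply injective_projections; simpl; ring. }
  destruct (Hind r2 (- r1)%R) as [Ha Hb].
  { rewrite Hx, Hy. apply injective_projections; simpl; ring. }
  assert (Hx0 : x = 0).
  { rewrite Hx. assert (r1 = 0%R) by lra. rewrite H. ring. }
  destruct (Hind 1%R 0%R) as [H1 _].
  { rewrite Hx0. ring. }
  lra.
Qed.

Lemma i_to_tuples (V : C -> Prop) (HV : is_space V) :
  (exists t : C, root_of_unity t /\ homothetic (Qspan 1 t) V) ->
  (exists l : list C, rational_tuple V 3 l /\ has_perpendicular l) /\
  (exists l : list C, rational_tuple V 4 l /\ has_perpendicular l).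
Proof.
  intros [t [Hroot [lam [Hlam Hh]]]].
  assert (Hnr := tau_nonreal V HV t lam Hh).
  assert (mem : forall p q : Q, V (lam * (Qscal p 1 + Qscal q t))).
  { intros p q. apply Hh. eexists; split; [exists p, q; reflexivity | reflexivity]. }
  destruct (root_polar t Hroot Hnr) as [q Ht].
  set (h := (Q2R q * PI)%R) in *.
  assert (Hs2 : sin (2 * h) <> 0%R) by (rewrite Ht in Hnr; exact Hnr).
  assert (Hsc : sin h <> 0%R /\ cos h <> 0%R).
  { rewrite sin_2a in Hs2. split; intro E; apply Hs2; rewrite E; ring. }
  destruct Hsc as [Hsh Hch].
  assert (Hpy : (sin h * sin h + cos h * cos h = 1)%R).
  { pose proof (sin2_cos2 h). unfold Rsqr in *. lra. }
  set (e0 := lam). set (e1 := lam * t). set (e2 := lam * (1 + t)). set (e3 := lam * (1 - t)).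
  assert (V0 : V e0).
  { replace e0 with (lam * (Qscal 1 1 + Qscal 0 t)). apply mem.
    unfold e0, Qscal. rewrite Q2R_1', RMicromega.Q2R_0. ring. }
  assert (V1 : V e1).
  { replace e1 with (lam * (Qscal 0 1 + Qscal 1 t)). apply mem.
    unfold e1, Qscal. rewrite Q2R_1', RMicromega.Q2R_0. ring. }
  assert (V2 : V e2).
  { replace e2 with (lam * (Qscal 1 1 + Qscal 1 t)). apply mem.
    unfold e2, Qscal. rewrite Q2R_1'. ring. }
  assert (V3 : V e3).
  { replace e3 with (lam * (Qscal 1 1 + Qscal (-1) t)). apply mem.
    unfold e3, Qscal, Q2R. cbn [Qnum Qden].
    apply injective_projections; simpl; field. }
  assert (P01 := good_pair e0 e1 1 ((2 # 1) * q)%Q Hlam ltac:(lra)).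
  rewrite Q2R_mult, Q2R_two in P01. rewrite Rmult_assoc in P01. fold h in P01.
  specialize (P01 Hs2).
  destruct P01 as [N1 [S01 [S10 [A01 A10]]]].
  { unfold e1, e0. f_equal. rewrite Ht. apply injective_projections; simpl; ring. }
  assert (P02 := good_pair e0 e2 (2 * cos h) q Hlam ltac:(lra) Hsh).
  destruct P02 as [N2 [S02 [S20 [A02 A20]]]].
  { unfold e2, e0. f_equal. fold h. rewrite Ht, cos_2a_cos, sin_2a.
    apply injective_projections; simpl; ring. }
  assert (P03 := good_pair e0 e3 (2 * sin h) (q - (1 # 2))%Q Hlam ltac:(lra)).
  rewrite Q2R_minus, Q2R_half in P03.
  replace ((Q2R q - / 2) * PI)%R with (h - PI / 2)%R in P03 by (unfold h; field).
  rewrite sin_minus, cos_minus, sin_PI2, cos_PI2 in P03.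
  destruct P03 as [N3 [S03 [S30 [A03 A30]]]].
  { replace (sin h * 0 - cos h * 1)%R with (- cos h)%R by ring. lra. }
  { unfold e3, e0. f_equal. rewrite Ht, cos_2a_sin, sin_2a.
    apply injective_projections; simpl; ring. }
  assert (Hn2 : e2 <> 0) by exact N2.
  assert (P12 := good_pair e1 e2 (2 * cos h) (- q)%Q N1 ltac:(lra)).
  rewrite Q2R_opp in P12.
  replace (- Q2R q * PI)%R with (- h)%R in P12 by (unfold h; ring).
  rewrite cos_neg, sin_neg in P12.
  destruct P12 as [_ [S12 [S21 [A12 A21]]]].
  { lra. }
  { unfold e2, e1. rewrite <- Cmult_assoc. f_equal. rewrite Ht, cos_2a_cos, sin_2a.
    apply injective_projections; simpl.
    - replace ((2 * cos h * cos h - 1) * (2 * cos h * cos h) -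
               (2 * sin h * cos h) * (2 * cos h * - sin h))%R
        with (4 * cos h * cos h * (cos h * cos h + sin h * sin h) - 2 * cos h * cos h)%R by ring.
      rewrite (Rplus_comm (cos h * cos h)), Hpy. ring.
    - replace ((2 * cos h * cos h - 1) * (2 * cos h * - sin h) +
               2 * sin h * cos h * (2 * cos h * cos h))%R
        with (2 * cos h * sin h)%R by ring. ring. }
  assert (P13 := good_pair e1 e3 (- (2 * sin h)) ((1 # 2) - q)%Q N1 ltac:(lra)).
  rewrite Q2R_minus, Q2R_half in P13.
  replace ((/ 2 - Q2R q) * PI)%R with (PI / 2 - h)%R in P13 by (unfold h; field).
  rewrite sin_minus, cos_minus, sin_PI2, cos_PI2 in P13.
  destruct P13 as [_ [S13 [S31 [A13 A31]]]].
  { replace (1 * cos h - 0 * sin h)%R with (cos h) by ring. exact Hch. }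
  { unfold e3, e1. rewrite <- Cmult_assoc. f_equal. rewrite Ht, cos_2a_sin, sin_2a.
    apply injective_projections; simpl.
    - replace ((1 - 2 * sin h * sin h) * (- (2 * sin h) * (0 * cos h + 1 * sin h)) -
               2 * sin h * cos h * (- (2 * sin h) * (1 * cos h - 0 * sin h)))%R
        with (4 * sin h * sin h * (sin h * sin h + cos h * cos h) - 2 * sin h * sin h)%R by ring.
      rewrite Hpy. ring.
    - ring. }
  assert (Hm := good_pair e2 e3 (sin h / cos h) (- (1 # 2))%Q Hn2).
  rewrite Q2R_opp, Q2R_half in Hm.
  replace (- / 2 * PI)%R with (- (PI / 2))%R in Hm by field.
  rewrite cos_neg, sin_neg, sin_PI2, cos_PI2 in Hm.
  assert (E23 : e3 = e2 * ((sin h / cos h * 0)%R, (sin h / cos h * - (1))%R)).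
  { unfold e3, e2. rewrite <- Cmult_assoc. f_equal. rewrite Ht, cos_2a_sin, sin_2a.
    apply injective_projections; simpl; replace (1 + (1 - 2 * sin h * sin h))%R with (2 * cos h * cos h)%R by lra; field; auto. }
  destruct (Hm ltac:(unfold Rdiv; apply Rmult_integral_contrapositive; split; auto; apply Rinv_neq_0_compat; auto) ltac:(lra) E23)
    as [_ [S23 [S32 [A23 A32]]]].
  assert (Perp : Re (e2 * Cconj e3) = 0%R).
  { rewrite E23. destruct e2 as [x y]. unfold Re, Cconj, Cmult; simpl. ring. }
  split.
  - exists (e0 :: e2 :: e3 :: nil). split.
    + split; [reflexivity|split].
      * intros i Hi. destruct i as [|[|[|i]]]; simpl; try lia; split; auto.
      * intros i j Hi Hj Hij.
        destruct i as [|[|[|i]]]; destruct j as [|[|[|j]]]; simpl; try lia;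
          split; assumption.
    + exists 1%nat, 2%nat. simpl. repeat split; try lia. exact Perp.
  - exists (e0 :: e1 :: e2 :: e3 :: nil). split.
    + split; [reflexivity|split].
      * intros i Hi. destruct i as [|[|[|[|i]]]]; simpl; try lia; split; auto.
      * intros i j Hi Hj Hij.
        destruct i as [|[|[|[|i]]]]; destruct j as [|[|[|[|j]]]]; simpl; try lia;
          split; assumption.
    + exists 2%nat, 3%nat. simpl. repeat split; try lia. exact Perp.
Qed.

Lemma perp_form (v w : C) : v <> 0 -> Re (v * Cconj w) = 0%R ->
  exists t : R, w = v * (0%R, t).
Proof.
  intros Hv Hre. destruct v as [a b], w as [c d].
  unfold Re, Cconj, Cmult in Hre; simpl in Hre.
  set (n := (a * a + b * b)%R).
  assert (Hn : n <> 0%R).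
  { intro E. apply Hv. unfold n in E.
    assert (a = 0%R) by nra. assert (b = 0%R) by nra. subst; reflexivity. }
  exists ((a * d - b * c) / n)%R.
  unfold Cmult; simpl. apply Cpair_eq.
  - apply (Rmult_eq_reg_r n); auto. field_simplify; auto.
    replace (c * n)%R with (a * (a*c - b * - d) + (-b*(a*d-b*c)))%R by (unfold n; ring).
    rewrite Hre. ring.
  - apply (Rmult_eq_reg_r n); auto. field_simplify; auto.
    replace (d * n)%R with (b * (a*c - b * - d) + (a*(a*d-b*c)))%R by (unfold n; ring).
    rewrite Hre. ring.
Qed.

Lemma indep_vt (v : C) (t al be : R) : v <> 0 -> t <> 0%R ->
  RtoC al * v + RtoC be * (v * (0%R, t)) = 0 -> al = 0%R /\ be = 0%R.
Proof.
  intros Hv Ht H.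
  assert (E : v * (al, (be * t)%R) = v * 0).
  { rewrite Cmult_0_r, <- H. destruct v as [x y]. apply injective_projections; simpl; ring. }
  apply Cmult_cancel_l in E; auto. injection E as E1 E2.
  split; auto. apply (Rmult_eq_reg_r t); auto. rewrite E2; ring.
Qed.

Lemma basis_vw (V : C -> Prop) (HV : is_space V) (v : C) (t : R) :
  v <> 0 -> t <> 0%R -> V v -> V (v * (0%R, t)) ->
  forall z, V z -> exists P0 Q0 : Q, z = Qscal P0 v + Qscal Q0 (v * (0%R, t)).
Proof.
  intros Hv Ht Vv Vw.
  set (w := v * (0%R, t)) in *.
  destruct HV as [_ [_ [_ [[u0 [w0 [Vu0 [Vw0 [Hind Hsp]]]]] _]]]].
  destruct (Hsp v Vv) as [p1 [q1 E1]].
  destruct (Hsp w Vw) as [p2 [q2 E2]].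
  intros z Vz. destruct (Hsp z Vz) as [p3 [q3 E3]].
  set (r1 := Q2R p1) in *. set (r2 := Q2R p2) in *. set (r3 := Q2R p3) in *.
  set (s1 := Q2R q1) in *. set (s2 := Q2R q2) in *. set (s3 := Q2R q3) in *.
  assert (HD : (r1 * s2 - r2 * s1)%R <> 0%R).
  { intro HD.
    assert (Ea : RtoC s2 * v + RtoC (- s1) * w = RtoC (r1 * s2 - r2 * s1) * u0).
    { rewrite E1, E2. unfold Qscal. fold r1 r2 s1 s2.
      destruct u0, w0. apply injective_projections; simpl; ring. }
    assert (Eb : RtoC r2 * v + RtoC (- r1) * w = RtoC (- (r1 * s2 - r2 * s1)) * w0).
    { rewrite E1, E2. unfold Qscal. fold r1 r2 s1 s2.
      destruct u0, w0. apply injective_projections; simpl; ring. }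
    rewrite HD in Ea, Eb. rewrite Ropp_0, Cmult_0_l in Eb. rewrite Cmult_0_l in Ea.
    unfold w in Ea, Eb.
    destruct (indep_vt v t _ _ Hv Ht Ea) as [Hs2 Hs1].
    destruct (indep_vt v t _ _ Hv Ht Eb) as [Hr2 Hr1].
    apply Hv. rewrite E1. unfold Qscal. fold r1 s1.
    assert (r1 = 0%R) by lra. assert (s1 = 0%R) by lra.
    rewrite H, H0. ring. }
  assert (HDq : ~ (p1 * q2 - p2 * q1 == 0)%Q).
  { intro E. apply Qeq_eqR in E. rewrite Q2R_minus, !Q2R_mult, RMicromega.Q2R_0 in E.
    apply HD. exact E. }
  exists ((p3 * q2 - q3 * p2) / (p1 * q2 - p2 * q1))%Q.
  exists ((p1 * q3 - q1 * p3) / (p1 * q2 - p2 * q1))%Q.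
  unfold Qscal. rewrite !Q2R_div by exact HDq.
  rewrite !Q2R_minus, !Q2R_mult. fold r1 r2 r3 s1 s2 s3.
  rewrite E3, E1, E2. unfold Qscal. fold r1 r2 r3 s1 s2 s3.
  destruct u0, w0. apply injective_projections; simpl; field; auto.
Qed.

Lemma cos_sin_2npi (n : Z) : cos (2 * (IZR n * PI)) = 1%R /\ sin (2 * (IZR n * PI)) = 0%R.
Proof.
  assert (H : sin (IZR n * PI) = 0%R) by (apply sin_eq_0_1; exists n; reflexivity).
  rewrite cos_2a_sin, sin_2a, H. split; ring.
Qed.

Lemma root_from_angle (qa : Q) :
  root_of_unity (cos (2 * (Q2R qa * PI)), sin (2 * (Q2R qa * PI))).
Proof.
  exists (Pos.to_nat (Qden qa)). split. apply Pos2Nat.is_pos.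
  rewrite Cpow_polar.
  assert (E : (INR (Pos.to_nat (Qden qa)) * (2 * (Q2R qa * PI)))%R = (2 * (IZR (Qnum qa) * PI))%R).
  { rewrite INR_IZR_INZ, Znat.positive_nat_Z. unfold Q2R. field.
    apply not_0_IZR. discriminate. }
  rewrite E. destruct (cos_sin_2npi (Qnum qa)) as [H1 H2]. rewrite H1, H2. reflexivity.
Qed.

Lemma core (V : C -> Prop) (HV : is_space V) (v w u : C) :
  V v -> V w -> V u -> v <> 0 -> w <> 0 -> Re (v * Cconj w) = 0%R ->
  ~ same_line v u -> ~ same_line w u -> rational_angle v u ->
  exists t : C, root_of_unity t /\ homothetic (Qspan 1 t) V.
Proof.
  intros Vv Vw Vu Hv Hw Hre Svu Swu [qa [rho [Hrho Hang]]].
  destruct (perp_form v w Hv Hre) as [t Ewt].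
  assert (Ht : t <> 0%R).
  { intro E. apply Hw. rewrite Ewt, E. apply injective_projections; simpl; ring. }
  subst w.
  assert (Bas := basis_vw V HV v t Hv Ht Vv Vw).
  destruct HV as [_ [Vadd [Vsc _]]].
  destruct (Bas u Vu) as [a' [b' Eu]].
  set (A := Q2R a') in *. set (B := Q2R b') in *.
  set (phi := (Q2R qa * PI)%R) in *.
  assert (Euv : u / v = (A, (B * t)%R)).
  { rewrite Eu. unfold Qscal. fold A B. field_simplify; auto.
    destruct v as [x y]. apply injective_projections; simpl; field; 
      intro E; apply Hv; apply Cpair_eq; nra. }
  rewrite Euv in Hang. injection Hang as HA HB.
  assert (HB0 : B <> 0%R).
  { intro E. apply Svu. exists A. rewrite Eu. unfold Qscal. fold A B. rewrite E.
    apply injective_projections; simpl; ring. }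
  assert (HA0 : A <> 0%R).
  { intro E. apply Swu. exists B. rewrite Eu. unfold Qscal. fold A B. rewrite E.
    apply injective_projections; simpl; ring. }
  assert (Hc : cos phi <> 0%R).
  { intro E. apply HA0. rewrite HA, E. ring. }
  set (c := (b' / a')%Q).
  assert (Ha'q : ~ (a' == 0)%Q).
  { intro E. apply Qeq_eqR in E. rewrite RMicromega.Q2R_0 in E. contradiction. }
  assert (Hcr : Q2R c = (B / A)%R) by (unfold c; rewrite Q2R_div; auto).
  assert (HK : (Q2R c * t)%R = (sin phi / cos phi)%R).
  { rewrite Hcr. apply (Rmult_eq_reg_r (rho * cos phi)).
    2: { apply Rmult_integral_contrapositive; split; lra. }
    rewrite <- HA. field_simplify; auto. rewrite HB, HA. field. auto. }
  set (lam := v + Qscal (- c) (v * (0%R, t))).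
  set (mu := v + Qscal c (v * (0%R, t))).
  set (tau := (cos (2 * phi), sin (2 * phi)) : C).
  assert (Elam : lam = v * (1%R, (- (sin phi / cos phi))%R)).
  { unfold lam, Qscal. rewrite Q2R_opp, <- HK.
    destruct v as [x y]. apply injective_projections; simpl; ring. }
  assert (Emu : mu = v * (1%R, (sin phi / cos phi)%R)).
  { unfold mu, Qscal. rewrite <- HK.
    destruct v as [x y]. apply injective_projections; simpl; ring. }
  assert (Hlt : lam * tau = mu).
  { rewrite Elam, Emu, <- Cmult_assoc. f_equal. unfold tau.
    apply injective_projections; simpl.
    - rewrite cos_2a_sin, sin_2a. field. auto.
    - rewrite cos_2a_cos, sin_2a. field. auto. }
  assert (Vlam : V lam) by (apply Vadd; auto).
  assert (Vmu : V mu) by (apply Vadd; auto).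
  exists tau. split. { apply root_from_angle. }
  exists lam. split.
  { rewrite Elam. apply Cmult_neq_0; auto. intro E. injection E as E. lra. }
  assert (Hy : forall p q : Q, lam * (Qscal p 1 + Qscal q tau) = Qscal p lam + Qscal q mu).
  { intros p q. rewrite <- Hlt. unfold Qscal. ring. }
  intro z. split.
  - intro Vz. destruct (Bas z Vz) as [P0 [Q0 Ez]].
    assert (Hcq : ~ (c == 0)%Q).
    { intro E. apply Qeq_eqR in E. rewrite RMicromega.Q2R_0, Hcr in E.
      apply HB0. apply (Rmult_eq_reg_r (/ A)). rewrite Rmult_0_l. exact E.
      apply Rinv_neq_0_compat; auto. }
    set (p := ((P0 - Q0 / c) * (1 # 2))%Q).
    set (q := ((P0 + Q0 / c) * (1 # 2))%Q).
    exists (Qscal p 1 + Qscal q tau). split. { exists p, q. reflexivity. }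
    rewrite Hy, Ez. unfold p, q, lam, mu, Qscal.
    rewrite !Q2R_mult, Q2R_minus, Q2R_plus, Q2R_div, Q2R_half, Q2R_opp by auto.
    assert (Hcr0 : Q2R c <> 0%R).
    { rewrite Hcr. unfold Rdiv. apply Rmult_integral_contrapositive; split; auto.
      apply Rinv_neq_0_compat; auto. }
    destruct v as [x y]. apply injective_projections; simpl; field; auto.
  - intros [y [[p [q Ey]] Ez]]. rewrite Ez, Ey, Hy.
    apply Vadd; apply Vsc; auto.
Qed.

Lemma tuple_to_i (V : C -> Prop) (HV : is_space V) (n : nat) (l : list C) :
  (3 <= n)%nat -> rational_tuple V n l -> has_perpendicular l ->
  exists t : C, root_of_unity t /\ homothetic (Qspan 1 t) V.
Proof.
  intros Hn [Hlen [Hmem Hpair]] [i [j [Hi [Hj [Hij Hperp]]]]].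
  rewrite Hlen in Hi, Hj.
  assert (Hk : exists k, (k < 3)%nat /\ k <> i /\ k <> j).
  { destruct (Nat.eq_dec i 0); destruct (Nat.eq_dec j 0).
    - lia.
    - destruct (Nat.eq_dec j 1); [exists 2%nat | exists 1%nat]; lia.
    - destruct (Nat.eq_dec i 1); [exists 2%nat | exists 1%nat]; lia.
    - exists 0%nat; lia. }
  destruct Hk as [k [Hk3 [Hki Hkj]]].
  assert (Hkn : (k < n)%nat) by lia.
  destruct (Hmem i Hi) as [Vv Hv0].
  destruct (Hmem j Hj) as [Vw Hw0].
  destruct (Hmem k Hkn) as [Vu _].
  destruct (Hpair i k Hi Hkn ltac:(lia)) as [S1 R1].
  destruct (Hpair j k Hj Hkn ltac:(lia)) as [S2 _].
  exact (core V HV _ _ _ Vv Vw Vu Hv0 Hw0 Hperp S1 S2 R1).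
Qed.

Theorem lemma7p1 (V : C -> Prop) (HV : is_space V) :
  ((exists t : C, root_of_unity t /\ homothetic (Qspan 1 t) V) <->
   (exists l : list C, rational_tuple V 3 l /\ has_perpendicular l)) /\
  ((exists l : list C, rational_tuple V 3 l /\ has_perpendicular l) <->
   (exists l : list C, rational_tuple V 4 l /\ has_perpendicular l)).
Proof.
  split; split.
  - intro H. exact (proj1 (i_to_tuples V HV H)).
  - intros [l [H1 H2]]. exact (tuple_to_i V HV 3 l ltac:(lia) H1 H2).
  - intros [l [H1 H2]]. exact (proj2 (i_to_tuples V HV (tuple_to_i V HV 3 l ltac:(lia) H1 H2))).
  - intros [l [H1 H2]]. exact (proj1 (i_to_tuples V HV (tuple_to_i V HV 4 l ltac:(lia) H1 H2))).
Qed.
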